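(* If $G$ is a cubic (3-regular) graph, then $\mathrm{TC}_2(G)=3$ and $\mathrm{TC}_3(G)=2$.
   Context: All graphs are finite, simple and connected. $N(v)$ denotes the open neighborhood of $v$. For $\delta(G)\ge k$, a set $S\subseteq V(G)$ is a total $k$-dominating set if $|N(v)\cap S|\ge k$ for every $v\in V(G)$. Two disjoint sets $U,W\subseteq V(G)$ form a total $k$-coalition if neither is a total $k$-dominating set but $U\cup W$ is. A total $k$-coalition partition of $G$ is a partition $\Omega$ of $V(G)$ in which every set forms a total $k$-coalition with some other set of $\Omega$; $\mathrm{TC}_k(G)$ is the maximum cardinality of such a partition. *)

(* Defs.v *)
From mathcomp Require Import all_boot.
Set Implicit Arguments. Unset Strict Implicit. Unset Printing Implicit Defensive.

Definition simple_graph (T : finType) (e : rel T) : Prop :=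
  symmetric e /\ irreflexive e.

Definition connected_graph (T : finType) (e : rel T) : Prop :=
  forall x y : T, connect e x y.

Definition nbhd (T : finType) (e : rel T) (v : T) : {set T} := [set u | e v u].

Definition cubic (T : finType) (e : rel T) : Prop :=
  forall v : T, #|nbhd e v| = 3.

Definition total_k_dom (T : finType) (e : rel T) (k : nat) (S : {set T}) : bool :=
  [forall v, k <= #|nbhd e v :&: S|].

Definition total_k_coalition (T : finType) (e : rel T) (k : nat) (U W : {set T}) : bool :=
  [&& [disjoint U & W], ~~ total_k_dom e k U, ~~ total_k_dom e k W
    & total_k_dom e k (U :|: W)].

Definition total_k_coalition_partition (T : finType) (e : rel T) (k : nat)
    (P : {set {set T}}) : bool :=
  partition P [set: T] &&
  [forall U in P, exists W in P, (W != U) && total_k_coalition e k U W].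

Definition TC (T : finType) (e : rel T) (k : nat) : nat :=
  \max_(P : {set {set T}} | total_k_coalition_partition e k P) #|P|.

(* Main.v *)
Require Import Defs.
From mathcomp Require Import all_boot.
From mathcomp Require Import zify.
Set Implicit Arguments. Unset Strict Implicit.

Section Aux.
Variables (T : finType) (e : rel T).

Lemma mkdisj (A B : {set T}) : (forall x, x \in A -> x \notin B) -> [disjoint A & B].
Proof.
move=> H; rewrite -setI_eq0; apply/eqP/setP=> x; rewrite !inE.
by case: (boolP (x \in A)) => // /H /negbTE ->.
Qed.

Lemma disjU (A B C : {set T}) : [disjoint A & C] -> [disjoint B & C] ->
  [disjoint A :|: B & C].
Proof.
move=> d1 d2; apply: mkdisj => x; rewrite inE => /orP [] h.
  by rewrite (disjointFr d1 h).
by rewrite (disjointFr d2 h).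
Qed.

Lemma cardIU (N X Y : {set T}) : [disjoint X & Y] ->
  #|N :&: (X :|: Y)| = #|N :&: X| + #|N :&: Y|.
Proof.
move=> d; rewrite setIUr cardsU.
have -> : (N :&: X) :&: (N :&: Y) = set0.
  apply/setP=> x; rewrite !inE; case: (boolP (x \in X)) => h; last by rewrite !andbF.
  by rewrite (disjointFr d h) !andbF.
by rewrite cards0 subn0.
Qed.

Hypothesis cub : cubic e.

Lemma cardNI v S : #|nbhd e v :&: S| <= 3.
Proof. by rewrite -(cub v); apply: subset_leq_card; apply: subsetIl. Qed.

Lemma two_disj (A B C D : {set T}) (v : T) :
  [disjoint A & B] -> [disjoint A & C] -> [disjoint A & D] ->
  [disjoint B & C] -> [disjoint B & D] -> [disjoint C & D] ->
  total_k_dom e 2 (A :|: B) -> total_k_dom e 2 (C :|: D) -> False.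
Proof.
move=> dAB dAC dAD dBC dBD dCD /forallP /(_ v) h1 /forallP /(_ v) h2.
have d : [disjoint A :|: B & C :|: D].
  apply: disjU; rewrite disjoint_sym; apply: disjU; rewrite disjoint_sym //.
have := cardNI v ((A :|: B) :|: (C :|: D)).
rewrite cardIU //. lia.
Qed.

Lemma center (C A B D : {set T}) :
  [disjoint C & A] -> [disjoint C & B] -> [disjoint C & D] ->
  [disjoint A & B] -> [disjoint A & D] -> [disjoint B & D] ->
  total_k_dom e 2 (C :|: A) -> total_k_dom e 2 (C :|: B) ->
  total_k_dom e 2 (C :|: D) -> ~~ total_k_dom e 2 C -> False.
Proof.
move=> dCA dCB dCD dAB dAD dBD /forallP hA /forallP hB /forallP hD.
move/forallPn=> [x]; rewrite -ltnNge => hx.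
have := hA x; have := hB x; have := hD x.
rewrite !cardIU //.
have := cardNI x (((C :|: A) :|: B) :|: D).
rewrite !cardIU //; last first.
- by apply: disjU => //; apply: disjU.
- by apply: disjU.
lia.
Qed.

End Aux.
Section Main.
Variables (T : finType) (e : rel T).
Hypothesis cub : cubic e.

Lemma ub2 (v : T) P : total_k_coalition_partition e 2 P -> #|P| <= 3.
Proof.
move/andP=> [/and3P [_ tiP _] /forall_inP hP].
rewrite leqNgt; apply/negP=> big.
have dj : forall X Y, X \in P -> Y \in P -> X != Y -> [disjoint X & Y].
  by move/trivIsetP: tiP.
have [U UP] : exists U, U \in P by apply/card_gt0P; lia.
have /exists_inP [W WP /andP [WU /and4P [dUW nU nW dU]]] := hP U UP.
have : 1 < #|P :\: [set U; W]|.
  have := cardsID [set U; W] P.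
  have : #|P :&: [set U; W]| <= 2.
    by apply: leq_trans (subset_leq_card (subsetIr _ _)) _; rewrite cards2; case: (U != W).
  lia.
move/card_gt1P=> [Z1 [Z2 [h1 h2 Z12]]].
move: h1 h2; rewrite !inE !negb_or => /andP [/andP [Z1U Z1W] Z1P] /andP [/andP [Z2U Z2W] Z2P].
have key : forall Z, Z \in P -> Z != U -> Z != W ->
    total_k_dom e 2 (Z :|: U) \/ total_k_dom e 2 (Z :|: W).
  move=> Z ZP ZU ZW.
  have /exists_inP [Z' Z'P /andP [Z'Z /and4P [_ _ _ dZ]]] := hP Z ZP.
  case: (eqVneq Z' U) => [eZ | Z'U]; first by left; rewrite -eZ.
  case: (eqVneq Z' W) => [eZ | Z'W]; first by right; rewrite -eZ.
  exfalso; apply: (@two_disj T e cub U W Z Z' v dUW) dU dZ.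
  - by apply: dj; rewrite // eq_sym.
  - by apply: dj; rewrite // eq_sym.
  - by apply: dj; rewrite // eq_sym.
  - by apply: dj; rewrite // eq_sym.
  - by apply: dj; rewrite // eq_sym.
rewrite eq_sym in WU.
have d1 : [disjoint U & Z1] by apply: dj; rewrite // eq_sym.
have d2 : [disjoint U & Z2] by apply: dj; rewrite // eq_sym.
have d3 : [disjoint W & Z1] by apply: dj; rewrite // eq_sym.
have d4 : [disjoint W & Z2] by apply: dj; rewrite // eq_sym.
have d5 : [disjoint Z1 & Z2] by apply: dj.
have d1' : [disjoint Z1 & U] by rewrite disjoint_sym.
have d2' : [disjoint Z2 & U] by rewrite disjoint_sym.
have d3' : [disjoint Z1 & W] by rewrite disjoint_sym.
have d4' : [disjoint Z2 & W] by rewrite disjoint_sym.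
have dWU : [disjoint W & U] by rewrite disjoint_sym.
have dU' : total_k_dom e 2 (W :|: U) by rewrite setUC.
case: (key Z1 Z1P Z1U Z1W) => k1; case: (key Z2 Z2P Z2U Z2W) => k2.
- rewrite setUC in k1; rewrite setUC in k2.
  exact: (@center T e cub U W Z1 Z2 dUW d1 d2 d3 d4 d5 dU k1 k2 nU).
- exact: (@two_disj T e cub Z1 U Z2 W v d1' d5 d3' d2 dUW d4' k1 k2).
- exact: (@two_disj T e cub Z1 W Z2 U v d3' d5 d1' d4 dWU d2' k1 k2).
- rewrite setUC in k1; rewrite setUC in k2.
  exact: (@center T e cub W U Z1 Z2 dWU d3 d4 d1 d2 d5 dU' k1 k2 nW).
Qed.
End Main.
Section Main2.
Variables (T : finType) (e : rel T).
Hypothesis cub : cubic e.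
Hypothesis sg : simple_graph e.

Lemma some_nbr x : exists y, y \in nbhd e x.
Proof. by apply/card_gt0P; rewrite cub. Qed.

Lemma dom3_all (S : {set T}) (x : T) : total_k_dom e 3 S -> x \in S.
Proof.
move=> /forallP hS; have [y hy] := some_nbr x.
have xy : x \in nbhd e y by move: hy; rewrite !inE (proj1 sg).
apply/negPn/negP => xS.
have : nbhd e y :&: S \subset nbhd e y :\ x.
  by apply/subsetP => z; rewrite !inE => /andP [-> zS]; rewrite andbT; apply: contraNneq xS => <-.
move/subset_leq_card; have := cardsD1 x (nbhd e y); rewrite xy cub.
have := hS y; lia.
Qed.

Lemma ub3 P : total_k_coalition_partition e 3 P -> #|P| <= 2.
Proof.
move/andP=> [/and3P [_ tiP P0] /forall_inP hP].
rewrite leqNgt; apply/negP=> big.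
have [U UP] : exists U, U \in P by apply/card_gt0P; lia.
have /exists_inP [W WP /andP [WU /and4P [dUW nU nW dU]]] := hP U UP.
have : 0 < #|P :\: [set U; W]|.
  have := cardsID [set U; W] P.
  have : #|P :&: [set U; W]| <= 2.
    by apply: leq_trans (subset_leq_card (subsetIr _ _)) _; rewrite cards2; case: (U != W).
  lia.
move/card_gt0P=> [Z]; rewrite !inE !negb_or => /andP [/andP [ZU ZW] ZP].
have : Z != set0 by apply: contraNneq P0 => <-.
move/set0Pn=> [z zZ].
have := @dom3_all _ z dU; rewrite inE => /orP [] h.
- by move/trivIsetP: tiP => /(_ Z U ZP UP ZU) d; rewrite (disjointFr d zZ) in h.
- by move/trivIsetP: tiP => /(_ Z W ZP WP ZW) d; rewrite (disjointFr d zZ) in h.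
Qed.

Lemma dom_but1 k (y : T) (S : {set T}) : k <= 2 -> (forall x, x != y -> x \in S) -> total_k_dom e k S.
Proof.
move=> k2 H; apply/forallP => u.
have : nbhd e u :\ y \subset nbhd e u :&: S.
  by apply/subsetP => z; rewrite !inE => /andP [zy ->]; rewrite H.
move/subset_leq_card; have := cardsD1 y (nbhd e u); rewrite cub.
case: (y \in nbhd e u) => /=; lia.
Qed.

Lemma notdom k (S : {set T}) (v : T) : #|nbhd e v :&: S| < k -> ~~ total_k_dom e k S.
Proof. by move=> h; apply/forallPn; exists v; rewrite -ltnNge. Qed.

Lemma coal_sym k (U W : {set T}) : total_k_coalition e k U W = total_k_coalition e k W U.
Proof.
rewrite /total_k_coalition disjoint_sym setUC.
by case: (total_k_dom e k U); case: (total_k_dom e k W); rewrite ?andbF.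
Qed.

Lemma card1I (v a : T) : #|nbhd e v :&: [set a]| <= 1.
Proof. by rewrite -(cards1 a); apply: subset_leq_card; apply: subsetIr. Qed.

End Main2.
Section Main3.
Variables (T : finType) (e : rel T).
Hypothesis cub : cubic e.
Hypothesis sg : simple_graph e.

Lemma lb3 (v : T) : exists P, total_k_coalition_partition e 3 P /\ #|P| = 2.
Proof.
have [w wv] := some_nbr cub v.
have vw : v \in nbhd e w by move: wv; rewrite !inE (proj1 sg).
have wnv : w != v by apply: contraTneq wv => ->; rewrite inE (proj2 sg).
have c1 : total_k_coalition e 3 [set v] (~: [set v]).
  apply/and4P; split.
  - by apply: mkdisj => x; rewrite !inE negbK.
  - by apply: (notdom (v:=v)); apply: leq_ltn_trans (card1I _ _ _) _.
  - apply: (notdom (v:=w)); rewrite -setDE.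
    by have := cardsD1 v (nbhd e w); rewrite vw cub => ->.
  - by apply/forallP => u; rewrite setUCr setIT cub.
have ne : [set v] != ~: [set v].
  by apply/eqP => /setP /(_ v); rewrite !inE eqxx.
exists [set [set v]; ~: [set v]]; split; last by rewrite cards2 ne.
apply/andP; split.
- apply/and3P; split.
  + apply/eqP/setP => x; rewrite inE; apply/bigcupP.
    case: (eqVneq x v) => [->|xv].
    * by exists [set v]; rewrite !inE ?eqxx.
    * by exists (~: [set v]); rewrite !inE ?eqxx ?orbT // xv.
  + apply/trivIsetP => X Y; rewrite !inE => /orP [] /eqP -> /orP [] /eqP ->;
      rewrite ?eqxx // => _; apply: mkdisj => x; rewrite !inE ?negbK //.
  + rewrite !inE negb_or; apply/andP; split; apply/negP => /eqP /setP.
    * by move/(_ v); rewrite !inE eqxx.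
    * by move/(_ w); rewrite !inE wnv.
- apply/forall_inP => X; rewrite !inE => /orP [] /eqP ->; apply/exists_inP.
  + by exists (~: [set v]); rewrite ?inE ?eqxx ?orbT // eq_sym ne.
  + by exists [set v]; rewrite ?inE ?eqxx // ne coal_sym.
Qed.

Lemma lb2 (v : T) : exists P, total_k_coalition_partition e 2 P /\ #|P| = 3.
Proof.
have /card_gt1P [a [b [av bv ab]]] : 1 < #|nbhd e v| by rewrite cub.
set R := ~: [set a; b].
have cR : #|nbhd e v :&: R| = 1.
  have := cardsID [set a; b] (nbhd e v).
  have -> : nbhd e v :&: [set a; b] = [set a; b].
    by apply/setIidPr/subsetP => x /set2P [] ->.
  by rewrite setDE cards2 ab cub => /eqP; rewrite -/R; lia.
have nR : ~~ total_k_dom e 2 R by apply: (notdom (v:=v)); rewrite cR.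
have n1 : forall c, ~~ total_k_dom e 2 [set c].
  by move=> c; apply: (notdom (v:=v)); apply: leq_ltn_trans (card1I _ _ _) _.
have ca : total_k_coalition e 2 [set a] R.
  apply/and4P; split => //.
  - by apply: mkdisj => x; rewrite !inE negbK => ->.
  - apply: (dom_but1 cub (y:=b)) => // x xb; rewrite !inE (negbTE xb) orbF.
    by case: (x == a).
have cb : total_k_coalition e 2 [set b] R.
  apply/and4P; split => //.
  - by apply: mkdisj => x; rewrite !inE negbK => ->; rewrite orbT.
  - apply: (dom_but1 cub (y:=a)) => // x xa; rewrite !inE (negbTE xa) /=.
    by case: (x == b).
have ba : b != a by rewrite eq_sym.
have neab : [set a] != [set b].
  by apply/eqP => /setP /(_ a); rewrite !inE eqxx (negbTE ab).
have neaR : [set a] != R.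
  by apply/eqP => /setP /(_ a); rewrite !inE eqxx.
have nebR : [set b] != R.
  by apply/eqP => /setP /(_ b); rewrite !inE eqxx orbT.
have vR : v \in R.
  rewrite !inE negb_or; apply/andP; split; apply/eqP => h.
  - by move: av; rewrite -h inE (proj2 sg).
  - by move: bv; rewrite -h inE (proj2 sg).
exists [set [set a]; [set b]; R]; split; last first.
  have -> : [set [set a]; [set b]; R] = [set a] |: [set [set b]; R] by apply/setP => X; rewrite !inE orbA.
  by rewrite cardsU1 cards2 nebR !inE negb_or neab neaR.
apply/andP; split.
- apply/and3P; split.
  + apply/eqP/setP => x; rewrite inE; apply/bigcupP.
    case: (eqVneq x a) => [->|xa].
      by exists [set a]; rewrite !inE ?eqxx.
    case: (eqVneq x b) => [->|xb].
      by exists [set b]; rewrite !inE ?eqxx ?orbT.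
    by exists R; rewrite !inE ?eqxx ?orbT ?negb_or ?xa ?xb.
  + apply/trivIsetP => X Y; rewrite !inE => /orP [/orP [] | ] /eqP -> /orP [/orP [] | ] /eqP ->;
      rewrite ?eqxx // => _; apply: mkdisj => x; rewrite !inE ?negbK ?negb_or //.
    * by move/eqP ->; rewrite eq_sym.
    * by move=> ->.
    * by move/eqP ->; rewrite eq_sym.
    * by move=> ->; rewrite orbT.
    * by case/andP.
    * by case/andP.
  + rewrite !inE !negb_or -andbA; apply/and3P; split; apply/negP => /eqP /setP.
    * by move/(_ a); rewrite !inE eqxx.
    * by move/(_ b); rewrite !inE eqxx.
    * by move/(_ v); rewrite vR inE.
- apply/forall_inP => X; rewrite !inE => /orP [/orP [] | ] /eqP ->; apply/exists_inP.
  + by exists R; rewrite ?inE ?eqxx ?orbT // eq_sym neaR.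
  + by exists R; rewrite ?inE ?eqxx ?orbT // eq_sym nebR.
  + by exists [set a]; rewrite ?inE ?eqxx // neaR coal_sym.
Qed.

End Main3.

Theorem theorem3p6 (T : finType) (e : rel T) :
  0 < #|T| -> simple_graph e -> connected_graph e -> cubic e ->
  TC e 2 = 3 /\ TC e 3 = 2.
Proof.
move=> /card_gt0P [v _] sg _ cub; split; apply/eqP; rewrite eqn_leq; apply/andP; split.
- by apply/bigmax_leqP => P; apply: ub2.
- have [P [hP <-]] := lb2 cub sg v; exact: leq_bigmax_cond.
- by apply/bigmax_leqP => P; apply: ub3.
- have [P [hP hc]] := lb3 cub sg v; rewrite -{1}hc; exact: leq_bigmax_cond.
Qed.
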